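(* Let $n \geq 1$, $N := 2^n$, and let $\ket{\psi} \in \mathbb{C}^N$ be any $n$-qubit (unit-norm) state. Then there exists a subset $S \subseteq [N]$ such that $|\langle S | \psi\rangle| \geq \dfrac{1}{8\sqrt{n+3}}$.
   Context: The computational basis of $n$ qubits is indexed by $[N] = \{1,\dots,N\}$, $N = 2^n$, written $\ket{1},\dots,\ket{N}$. For a nonempty subset $S \subseteq [N]$, the subset state is $\ket{S} := \frac{1}{\sqrt{|S|}} \sum_{i \in S} \ket{i}$. *)

(* Defs.v *)
From mathcomp Require Import all_boot all_algebra.
From mathcomp Require Import reals complex.
Import GRing.Theory Num.Theory.
Set Implicit Arguments. Unset Strict Implicit. Unset Printing Implicit Defensive.
Local Open Scope ring_scope.
Local Open Scope complex_scope.

(* A vector of C^N, N = #|I|, in the computational basis indexed by I. *)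
Definition ket (R : realType) (I : finType) := I -> R[i].

Definition subset_state (R : realType) (I : finType) (S : {set I}) : ket R I :=
  fun i => if i \in S then ((Num.sqrt (#|S|%:R : R))^-1)%:C else 0.

Definition braket (R : realType) (I : finType) (phi psi : ket R I) : R[i] :=
  \sum_i (phi i)^* * psi i.

Definition unit_ket (R : realType) (I : finType) (psi : ket R I) : Prop :=
  \sum_i `|psi i| ^+ 2 = 1.

(* Main.v *)
Require Import Defs.
From mathcomp Require Import all_boot all_algebra.
From mathcomp Require Import reals complex.
From mathcomp Require Import ring lra order.
Import Order.TTheory GRing.Theory Num.Theory.
Set Implicit Arguments. Unset Strict Implicit. Unset Printing Implicit Defensive.
Local Open Scope ring_scope.

Definition tt (R : realType) (k : nat) : R := (2^-1) ^+ k.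

Lemma tS (R : realType) k : tt R k.+1 = tt R k / 2.
Proof. by rewrite /tt exprSr. Qed.
Lemma tgt0 (R : realType) k : 0 < tt R k.
Proof. by rewrite /tt exprn_gt0 // invr_gt0 ltr0n. Qed.
Lemma tle1 (R : realType) k : tt R k <= 1.
Proof. rewrite /tt exprn_ile1 // ?invr_ge0 ?ler0n // invf_le1 ?ltr0n //; lra. Qed.

Lemma pointwise (R : realType) (x : R) (J : nat) : 0 <= x -> x <= 1 ->
  x ^+ 2 <= 4 * \sum_(j < J) (if tt R j.+1 <= x then tt R j.+1 ^+ 2 else 0)
            + tt R J ^+ 2.
Proof.
move=> x0 x1; elim: J => [|J IH].
  rewrite big_ord0 mulr0 add0r /tt expr0 expr1n; nra.
rewrite big_ord_recr /=.
have hS := tS R J. have h0 := tgt0 R J.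
have hs : 0 <= \sum_(j < J) (if tt R j.+1 <= x then tt R j.+1 ^+ 2 else 0).
  by apply: sumr_ge0 => j _; case: ifP => // _; exact: sqr_ge0.
case: ifP => hx.
  rewrite hS; rewrite hS in hx; nra.
move/negbT: hx; rewrite -ltNge => hx; nra.
Qed.

Lemma sum_ind (R : realType) (I : finType) (P : pred I) (a : R) :
  \sum_i (if P i then a else 0) = a * #|[set i | P i]|%:R.
Proof. rewrite -big_mkcond /= sumr_const mulr_natr; congr (_ *+ _); by apply: eq_card => i; rewrite inE. Qed.

Lemma sumbound (R : realType) (I : finType) (x : I -> R) (J : nat) (c : R) :
  (forall i, 0 <= x i) -> (forall i, x i <= 1) ->
  (forall j : 'I_J, tt R j.+1 ^+ 2 * #|[set i | tt R j.+1 <= x i]|%:R <= c) ->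
  \sum_i x i ^+ 2 <= 4 * (J%:R * c) + #|I|%:R * tt R J ^+ 2.
Proof.
move=> hx0 hx1 hc.
apply: (@le_trans _ _ (\sum_i (4 * \sum_(j < J) (if tt R j.+1 <= x i then tt R j.+1 ^+ 2 else 0) + tt R J ^+ 2))).
  by apply: ler_sum => i _; exact: pointwise.
rewrite big_split /= -mulr_sumr exchange_big /= sumr_const.
apply: lerD; last by rewrite mulr_natl.
rewrite ler_pM2l; last lra.
apply: le_trans (_ : \sum_(j < J) c <= _); last by rewrite sumr_const card_ord mulr_natl.
apply: ler_sum => j _; rewrite (@sum_ind R I (fun i => tt R j.+1 <= x i)); exact: hc.
Qed.

Lemma exists_level (R : realType) (n : nat) (x : 'I_(2 ^ n) -> R) (c2 : R) :
  (forall i, 0 <= x i) -> (forall i, x i <= 1) -> 1/4 <= \sum_i x i ^+ 2 ->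
  0 <= c2 -> (n + 3)%:R * c2 = 1/64 ->
  exists j : 'I_(n + 3), [set i | tt R j.+1 <= x i] != set0 /\
     c2 <= tt R j.+1 ^+ 2 * #|[set i | tt R j.+1 <= x i]|%:R.
Proof.
move=> hx0 hx1 hs hc0 hc.
case: (boolP [exists j : 'I_(n + 3), ([set i | tt R j.+1 <= x i] != set0) &&
     (c2 <= tt R j.+1 ^+ 2 * #|[set i | tt R j.+1 <= x i]|%:R)]).
  by case/existsP => j /andP [h1 h2]; exists j.
rewrite negb_exists => /forallP hall.
have hb : forall j : 'I_(n + 3), tt R j.+1 ^+ 2 * #|[set i | tt R j.+1 <= x i]|%:R <= c2.
  move=> j; have := hall j; rewrite negb_and negbK.
  case/orP => [/eqP -> | h]; first by rewrite cards0 mulr0.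
  by apply: ltW; rewrite ltNge.
have := sumbound hx0 hx1 hb.
rewrite card_ord hc.
have ht : (2 ^ n)%:R * tt R (n + 3) ^+ 2 <= 1/8.
  rewrite expr2 {1}/tt exprD natrX !mulrA -exprMn mulfV ?pnatr_eq0 // expr1n mul1r.
  have h1 := tle1 R (n + 3). have h2 := tgt0 R (n + 3).
  nra.
lra.
Qed.

Local Open Scope complex_scope.

Lemma le_sqrt_of (R : realType) (r A : R) : r ^+ 2 <= A -> r <= Num.sqrt A.
Proof.
move=> h; apply: le_trans (ler_norm r) _; rewrite -sqrtr_sqr; exact: ler_wsqrtr.
Qed.

Lemma from_x (R : realType) (n : nat) (psi : ket R 'I_(2 ^ n)) (x : 'I_(2 ^ n) -> R) :
  (forall i, 0 <= x i) -> (forall i, x i <= 1) -> 1/4 <= \sum_i x i ^+ 2 ->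
  (forall S : {set 'I_(2 ^ n)}, (forall i, i \in S -> 0 < x i) ->
     \sum_(i in S) x i <= Num.sqrt (complex.Re (\sum_(i in S) psi i) ^+ 2 + complex.Im (\sum_(i in S) psi i) ^+ 2)) ->
  exists S : {set 'I_(2 ^ n)},
    S != set0 /\
    ((8 * Num.sqrt ((n + 3)%:R : R))^-1)%:C <= `|braket (subset_state R S) psi|.
Proof.
move=> hx0 hx1 hs hP.
set s := Num.sqrt ((n + 3)%:R : R).
have s0 : 0 < s by rewrite sqrtr_gt0 ltr0n addn3.
have ss : s ^+ 2 = (n + 3)%:R by rewrite sqr_sqrtr // ler0n.
have [|j [hne hj]] := exists_level hx0 hx1 hs (c2 := (8 * s)^-1 ^+ 2) (sqr_ge0 _).
  by rewrite -ss; field; rewrite gt_eqF.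
set S := [set i | tt R j.+1 <= x i] in hne hj *.
exists S; split => //.
rewrite /braket /subset_state.
set w := (Num.sqrt (#|S|%:R : R))^-1.
have -> : \sum_i ((if i \in S then w%:C else 0)^* * psi i) = w%:C * \sum_(i in S) psi i.
  rewrite mulr_sumr [RHS]big_mkcond /=; apply: eq_bigr => i _.
  case: ifP => _; last by rewrite conjC0 mul0r.
  by rewrite conj_Creal // complex_real.
rewrite normrM [`|w%:C|]ger0_norm; last by rewrite ler0c invr_ge0 sqrtr_ge0.
rewrite normc_def.
rewrite -rmorphM lecR.
have hsum : tt R j.+1 * #|S|%:R <= \sum_(i in S) x i.
  rewrite mulr_natr -sumr_const; apply: ler_sum => i; rewrite inE; exact.
have /hP hPS : forall i, i \in S -> 0 < x i.
  by move=> i; rewrite inE => hi; exact: lt_le_trans (tgt0 R j.+1) hi.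
have k0 : (0 < #|S|%:R :> R) by rewrite ltr0n card_gt0.
rewrite /w; clear w.
set k := (#|S|%:R : R) in hj hsum k0 *.
set q := Num.sqrt k.
have q0 : 0 < q by rewrite sqrtr_gt0.
have qq : q ^+ 2 = k by rewrite sqr_sqrtr // ltW.
rewrite ler_pdivlMl //.
set c := (8 * s)^-1 in hj *.
have c0 : 0 <= c by rewrite invr_ge0 mulr_ge0 // ltW.
have t0 := tgt0 R j.+1.
set t := tt R j.+1 in hj hsum t0.
have hct : c <= t * q.
  have h : c <= Num.sqrt ((t * q) ^+ 2) by apply: le_sqrt_of; rewrite exprMn qq.
  by rewrite sqrtr_sqr ger0_norm // in h; rewrite mulr_ge0 // ltW.
apply: le_trans hPS; apply: le_trans hsum; rewrite -qq; nra.
Qed.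

Definition pos (R : realType) (a : R) := if 0 < a then a else 0.

Lemma pos_ge0 (R : realType) (a : R) : 0 <= pos a.
Proof. by rewrite /pos; case: ifP => // /ltW. Qed.

Lemma pos_sq_le (R : realType) (a : R) : pos a ^+ 2 <= a ^+ 2.
Proof. rewrite /pos; case: ifP => // _; rewrite expr0n /=; exact: sqr_ge0. Qed.

Lemma pos_eq (R : realType) (a : R) : 0 < pos a -> pos a = a.
Proof. by rewrite /pos; case: ifP => //; rewrite ltxx. Qed.

Lemma pos_sqr (R : realType) (a : R) : pos a ^+ 2 + pos (- a) ^+ 2 = a ^+ 2.
Proof.
rewrite /pos; case: (boolP (0 < a)) => h1; case: (boolP (0 < - a)) => h2.
- lra.
- by rewrite expr0n addr0.
- by rewrite expr0n add0r sqrrN.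
- rewrite -leNgt in h1; rewrite -leNgt in h2; nra.
Qed.

Lemma Re_sum (R : realType) (I : finType) (S : {set I}) (f : I -> R[i]) :
  complex.Re (\sum_(i in S) f i) = \sum_(i in S) complex.Re (f i).
Proof. by apply: (big_morph (@complex.Re R)) => // [[a b] [c d]]. Qed.

Lemma Im_sum (R : realType) (I : finType) (S : {set I}) (f : I -> R[i]) :
  complex.Im (\sum_(i in S) f i) = \sum_(i in S) complex.Im (f i).
Proof. by apply: (big_morph (@complex.Im R)) => // [[a b] [c d]]. Qed.

Lemma unit_Re_Im (R : realType) (I : finType) (psi : ket R I) : unit_ket psi ->
  \sum_i (complex.Re (psi i) ^+ 2 + complex.Im (psi i) ^+ 2) = 1.
Proof.
move=> hpsi; apply: (@complexI R).
rewrite rmorph_sum /= rmorph1 -hpsi; apply: eq_bigr => i _; exact: add_Re2_Im2.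
Qed.

Lemma from_g (R : realType) (n : nat) (psi : ket R 'I_(2 ^ n)) (g : R[i] -> R) :
  unit_ket psi ->
  (forall S : {set 'I_(2 ^ n)}, g (\sum_(i in S) psi i) = \sum_(i in S) g (psi i)) ->
  (forall z, g z ^+ 2 <= complex.Re z ^+ 2 + complex.Im z ^+ 2) ->
  1/4 <= \sum_i pos (g (psi i)) ^+ 2 ->
  exists S : {set 'I_(2 ^ n)},
    S != set0 /\
    ((8 * Num.sqrt ((n + 3)%:R : R))^-1)%:C <= `|braket (subset_state R S) psi|.
Proof.
move=> hpsi gsum gb hs; have h1 := unit_Re_Im hpsi.
apply: (@from_x R n psi (fun i => pos (g (psi i)))) => //.
- by move=> i; exact: pos_ge0.
- move=> i.
  have hle : pos (g (psi i)) ^+ 2 <= 1.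
    apply: le_trans (pos_sq_le _) _; apply: le_trans (gb _) _.
    rewrite -h1 (bigD1 i) //= lerDl; apply: sumr_ge0 => j _.
    by rewrite addr_ge0 // sqr_ge0.
  have := pos_ge0 (g (psi i)); nra.
- move=> S hS.
  have -> : \sum_(i in S) pos (g (psi i)) = g (\sum_(i in S) psi i).
    by rewrite gsum; apply: eq_bigr => i /hS /pos_eq.
  exact/le_sqrt_of/gb.
Qed.

Unset Implicit Arguments.
Theorem mainTheorem2 (R : realType) (n : nat) (hn : (1 <= n)%N)
    (psi : ket R 'I_(2 ^ n)) (hpsi : unit_ket psi) :
  exists S : {set 'I_(2 ^ n)},
    S != set0 /\
    ((8 * Num.sqrt ((n + 3)%:R : R))^-1)%:C <= `|braket (subset_state R S) psi|.
Proof.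
have h1 := unit_Re_Im hpsi.
have hsplit : \sum_i pos (complex.Re (psi i)) ^+ 2 + \sum_i pos (- complex.Re (psi i)) ^+ 2
  + (\sum_i pos (complex.Im (psi i)) ^+ 2 + \sum_i pos (- complex.Im (psi i)) ^+ 2) = 1.
  by rewrite -!big_split -h1; apply: eq_bigr => i _; rewrite /= !pos_sqr.
have gbRe : forall z : R[i], complex.Re z ^+ 2 <= complex.Re z ^+ 2 + complex.Im z ^+ 2.
  by move=> z; rewrite lerDl sqr_ge0.
have gbIm : forall z : R[i], complex.Im z ^+ 2 <= complex.Re z ^+ 2 + complex.Im z ^+ 2.
  by move=> z; rewrite lerDr sqr_ge0.
case: (lerP (1/4) (\sum_i pos (complex.Re (psi i)) ^+ 2)) => h.
  apply: (@from_g R n psi (@complex.Re R)) => //.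
  by move=> S; apply: (big_morph (@complex.Re R)) => // [[a b] [c d]].
case: (lerP (1/4) (\sum_i pos (- complex.Re (psi i)) ^+ 2)) => h'.
  apply: (@from_g R n psi (fun z => - complex.Re z) hpsi _ _ h') => //.
    by move=> S; apply: (big_morph (fun z : R[i] => - complex.Re z)) => [[a b] [c d]|] /=; rewrite ?opprD ?oppr0.
  by move=> z; rewrite sqrrN.
case: (lerP (1/4) (\sum_i pos (complex.Im (psi i)) ^+ 2)) => h''.
  apply: (@from_g R n psi (@complex.Im R)) => //.
  by move=> S; apply: (big_morph (@complex.Im R)) => // [[a b] [c d]].
case: (lerP (1/4) (\sum_i pos (- complex.Im (psi i)) ^+ 2)) => h'''.
  apply: (@from_g R n psi (fun z => - complex.Im z) hpsi _ _ h''') => //.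
    by move=> S; apply: (big_morph (fun z : R[i] => - complex.Im z)) => [[a b] [c d]|] /=; rewrite ?opprD ?oppr0.
  by move=> z; rewrite sqrrN.
lra.
Qed.
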